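(* Let $k$ be a field of characteristic $\neq2$, $f\in k[X]$ separable of degree $6$, $A=k[X]/(f)$, $\delta\in A^*$, and let $\Lambda$ be the set of $32$ lines $L_\varepsilon$ on $V_{f,\delta}\otimes\bar k$. Let $\Lambda_1,\Lambda_2$ be the two maximal subsets of $\Lambda$ consisting of lines of the same parity. Then $k(\Lambda_1)=k(\Lambda_2)=k\big(\sqrt{N(\delta)}\big)$, where $N=N_{A/k}$ is the norm from $A$ to $k$.
   Context: $V_{f,\delta}=\{[q]\in\mathbb{P}(A):\delta q^2\in\mathrm{span}(1,X,X^2)\}$. For $\varepsilon\in A\otimes\bar k$ with $\varepsilon^2=\delta$, $L_\varepsilon$ is the line corresponding to the subspace $\{\varepsilon^{-1}(sX+t)\}$. Let $\Omega$ be the roots of $f$ and $\varphi_\theta$ evaluation at $X=\theta$. Two lines $L_\varepsilon,L_{\varepsilon'}$ have the same parity if the number of $\theta\in\Omega$ with $\varphi_\theta(\varepsilon'/\varepsilon)=-1$ is even; this is independent of the signs of $\varepsilon,\varepsilon'$ since $\#\Omega=6$. For a set $Y$ acted on by $G(\bar k/k)$, $k(Y)$ is the smallest subfield $k'\supseteq k$ of $\bar k$ such that every $\sigma\in G(\bar k/k')$ maps $Y$ to itself. *)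

(* Defs.v *)
From HB Require Import structures.
From mathcomp Require Import all_boot all_order all_algebra all_field.
Set Implicit Arguments. Unset Strict Implicit. Unset Printing Implicit Defensive.
Import Order.TTheory GRing.Theory.
Local Open Scope ring_scope.

Section Defs.
Variables (k : fieldType) (K : closedFieldType) (iota : {rmorphism k -> K}).

(* K plays the role of \bar k : algebraically closed and algebraic over iota(k) *)
Definition algebraic_over : Prop :=
  forall x : K, exists p : {poly k}, p != 0 /\ root (map_poly iota p) x.

(* Norm N_{A/k}(delta), A = k[X]/(f), deg f = 6: determinant of the
   k-linear map "multiplication by delta" in the basis 1, X, ..., X^5. *)
Definition normA (f delta : {poly k}) : k :=
  \det (\matrix_(i < 6, j < 6) ((delta * 'X^i) %% f)`_j).

(* Elements of A (x) \bar k are represented by polynomials over K, modulo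
   fK = f^iota.  L_eps = { eps^{-1} (sX + t) : s, t in K }. *)
Definition lineL (fK eps : {poly K}) : {poly K} -> Prop :=
  fun q => exists e', (eps * e') %% fK = 1 /\
    exists s t : K, q = (e' * (s *: 'X + t%:P)) %% fK.

Definition is_sqrt (fK deltaK eps : {poly K}) : Prop :=
  (eps * eps) %% fK = deltaK %% fK.

Definition Lines (f delta : {poly k}) : ({poly K} -> Prop) -> Prop :=
  fun l => exists eps, is_sqrt (map_poly iota f) (map_poly iota delta) eps /\
    l = lineL (map_poly iota f) eps.

Definition even_sign_changes (fK eps1 eps2 : {poly K}) : Prop :=
  exists rs : seq K, uniq rs /\ (forall x, (x \in rs) = root fK x) /\
    ~~ odd (count (fun th => eps2.[th] / eps1.[th] == -1) rs).

Definition same_parity (f delta : {poly k}) (l1 l2 : {poly K} -> Prop) : Prop :=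
  let fK := map_poly iota f in let dK := map_poly iota delta in
  exists eps1 eps2, is_sqrt fK dK eps1 /\ is_sqrt fK dK eps2 /\
    l1 = lineL fK eps1 /\ l2 = lineL fK eps2 /\ even_sign_changes fK eps1 eps2.

Definition parity_set (f delta : {poly k}) (S : ({poly K} -> Prop) -> Prop) : Prop :=
  (forall l, S l -> Lines f delta l) /\
  (forall l1 l2, S l1 -> S l2 -> same_parity f delta l1 l2).

Definition maximal_parity_set (f delta : {poly k}) (S : ({poly K} -> Prop) -> Prop) : Prop :=
  parity_set f delta S /\
  forall S', parity_set f delta S' -> (forall l, S l -> S' l) -> forall l, S' l -> S l.

Definition is_subfield (F : K -> Prop) : Prop :=
  F 0 /\ F 1 /\ (forall x y, F x -> F y -> F (x - y)) /\
  (forall x y, F x -> F y -> F (x * y)) /\ (forall x, F x -> F x^-1).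

Definition ext_of_k (F : K -> Prop) : Prop :=
  is_subfield F /\ forall a : k, F (iota a).

Definition fixes (sigma : {rmorphism K -> K}) (F : K -> Prop) : Prop :=
  bijective sigma /\ forall x, F x -> sigma x = x.

Definition line_img (sigma : {rmorphism K -> K}) (l : {poly K} -> Prop) : {poly K} -> Prop :=
  fun q => exists q0, l q0 /\ q = map_poly sigma q0.

Definition stabilizes (sigma : {rmorphism K -> K}) (Y : ({poly K} -> Prop) -> Prop) : Prop :=
  forall l, Y l -> Y (line_img sigma l).

Definition preserved_over (F : K -> Prop) (Y : ({poly K} -> Prop) -> Prop) : Prop :=
  forall sigma : {rmorphism K -> K}, fixes sigma F -> stabilizes sigma Y.

Definition is_field_of_def (Y : ({poly K} -> Prop) -> Prop) (F : K -> Prop) : Prop :=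
  ext_of_k F /\ preserved_over F Y /\
  forall F', ext_of_k F' -> preserved_over F' Y -> forall x, F x -> F' x.

Definition adjoin (s : K) : K -> Prop :=
  fun x => forall F, ext_of_k F -> F s -> F x.

End Defs.

(* Main.v *)
Require Import Defs.
From HB Require Import structures.
From mathcomp Require Import all_boot all_order all_algebra all_field.
From mathcomp Require Import boolp classical_sets wochoice zify.
From mathcomp.algebra_tactics Require Import ring.
Set Implicit Arguments. Unset Strict Implicit. Unset Printing Implicit Defensive.
Import Order.TTheory GRing.Theory.
Local Open Scope ring_scope.

Section MkRM.
Variables (K : fieldType) (g : K -> K).
Hypotheses (gB : forall x y, g (x - y) = g x - g y) (gM : forall x y, g (x * y) = g x * g y)
  (g1 : g 1 = 1).
Definition mkf := g.
HB.instance Definition _ := GRing.isZmodMorphism.Build K K mkf gB.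
HB.instance Definition _ := GRing.isMonoidMorphism.Build K K mkf (g1, gM).
Definition mkrm : {rmorphism K -> K} := mkf.
Lemma mkrmE x : mkrm x = g x. Proof. by []. Qed.
End MkRM.

Section Sub.
Variable K : closedFieldType.
Implicit Types (E S : K -> Prop) (p q : {poly K}).

Section SF.
Variables (E : K -> Prop) (HE : is_subfield E).
Lemma sf0 : E 0. Proof. by case: HE. Qed.
Lemma sf1 : E 1. Proof. by case: HE => _ []. Qed.
Lemma sfB x y : E x -> E y -> E (x - y). Proof. by case: HE => _ [_ [H _]]; apply: H. Qed.
Lemma sfM x y : E x -> E y -> E (x * y). Proof. by case: HE => _ [_ [_ [H _]]]; apply: H. Qed.
Lemma sfV x : E x -> E x^-1. Proof. by case: HE => _ [_ [_ [_ H]]]; apply: H. Qed.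
Lemma sfN x : E x -> E (- x). Proof. by move=> Ex; rewrite -sub0r; apply: sfB => //; apply: sf0. Qed.
Lemma sfD x y : E x -> E y -> E (x + y).
Proof. by move=> Ex Ey; rewrite -[y]opprK; apply: sfB => //; apply: sfN. Qed.
Lemma sfX x n : E x -> E (x ^+ n).
Proof. move=> Ex; elim: n => [|n IH]; first by rewrite expr0; apply: sf1.
by rewrite exprS; apply: sfM. Qed.
End SF.

Definition ringcl S := S 0 /\ S 1 /\ (forall x y, S x -> S y -> S (x + y)) /\
  (forall x y, S x -> S y -> S (x * y)).

Lemma sf_ringcl E : is_subfield E -> ringcl E.
Proof. move=> HE; split; [exact: sf0|split; [exact: sf1|split; [exact: sfD|exact: sfM]]]. Qed.

Lemma rcl_sum S (I : Type) (r : seq I) (F : I -> K) :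
  ringcl S -> (forall i, S (F i)) -> S (\sum_(i <- r) F i).
Proof.
move=> [S0 [S1 [SD SM]]] HF; elim: r => [|a r IH]; first by rewrite big_nil.
by rewrite big_cons; apply: SD.
Qed.

Lemma rcl_X S x n : ringcl S -> S x -> S (x ^+ n).
Proof. move=> [S0 [S1 [SD SM]]] Sx; elim: n => [|n IH]; first by rewrite expr0.
by rewrite exprS; apply: SM. Qed.

Definition pov E p := forall i, E p`_i.

Lemma rcl_horner E S p z : ringcl S -> (forall x, E x -> S x) -> pov E p -> S z -> S p.[z].
Proof.
move=> HS ES Ep Sz; rewrite horner_coef; apply: rcl_sum => // i.
have [_ [_ [_ SM]]] := HS; by apply: SM; [apply: ES | apply: rcl_X].
Qed.

Section Pov.
Variables (E : K -> Prop) (HE : is_subfield E).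
Lemma pov0 : pov E 0. Proof. by move=> i; rewrite coef0; apply: sf0. Qed.
Lemma povC c : E c -> pov E c%:P.
Proof. move=> Ec i; rewrite coefC; case: (i == 0)%N; [exact: Ec | exact: sf0]. Qed.
Lemma povX : pov E 'X.
Proof. move=> i; rewrite coefX; case: (i == 1)%N; [exact: sf1 | exact: sf0]. Qed.
Lemma povD p q : pov E p -> pov E q -> pov E (p + q).
Proof. by move=> Ep Eq i; rewrite coefD; apply: sfD. Qed.
Lemma povN p : pov E p -> pov E (- p).
Proof. by move=> Ep i; rewrite coefN; apply: sfN. Qed.
Lemma povB p q : pov E p -> pov E q -> pov E (p - q).
Proof. by move=> Ep Eq; apply: povD => //; apply: povN. Qed.
Lemma povM p q : pov E p -> pov E q -> pov E (p * q).
Proof.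
move=> Ep Eq i; rewrite coefM; apply: rcl_sum; first exact: sf_ringcl.
by move=> j; apply: sfM.
Qed.
Lemma povZ c p : E c -> pov E p -> pov E (c *: p).
Proof. by move=> Ec Ep i; rewrite coefZ; apply: sfM. Qed.
Lemma povXn n : pov E 'X^n.
Proof. move=> i; rewrite coefXn; case: (i == n)%N; [exact: sf1 | exact: sf0]. Qed.
Lemma pov_horner p x : pov E p -> E x -> E p.[x].
Proof. by move=> Ep Ex; apply: (rcl_horner (E:=E)) => //; apply: sf_ringcl. Qed.
End Pov.

Definition pemb E (t : K -> K) := is_subfield E /\
  (forall x y, E x -> E y -> t (x + y) = t x + t y) /\
  (forall x y, E x -> E y -> t (x * y) = t x * t y) /\ t 1 = 1.

Section Pemb.
Variables (E : K -> Prop) (t : K -> K) (Ht : pemb E t).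
Let HE : is_subfield E. Proof. by case: Ht. Qed.
Lemma peD x y : E x -> E y -> t (x + y) = t x + t y. Proof. by case: Ht => _ [H _]; apply: H. Qed.
Lemma peM x y : E x -> E y -> t (x * y) = t x * t y. Proof. by case: Ht => _ [_ [H _]]; apply: H. Qed.
Lemma pe1 : t 1 = 1. Proof. by case: Ht => _ [_ []]. Qed.
Lemma pe0 : t 0 = 0.
Proof.
have h := peD (sf0 HE) (sf0 HE); rewrite addr0 in h.
by apply: (addrI (t 0)); rewrite addr0 -h.
Qed.
Lemma peN x : E x -> t (- x) = - t x.
Proof.
move=> Ex; have h := peD Ex (sfN HE Ex); rewrite subrr pe0 in h.
by apply: (addrI (t x)); rewrite -h subrr.
Qed.
Lemma peB x y : E x -> E y -> t (x - y) = t x - t y.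
Proof. by move=> Ex Ey; rewrite peD ?peN //; apply: sfN. Qed.
Lemma pe_sum (I : Type) (r : seq I) (F : I -> K) :
  (forall i, E (F i)) -> t (\sum_(i <- r) F i) = \sum_(i <- r) t (F i).
Proof.
move=> HF; elim: r => [|a r IH]; first by rewrite !big_nil pe0.
rewrite !big_cons peD ?IH //; apply: rcl_sum => //; exact: sf_ringcl.
Qed.

Lemma mp_coef p i : (map_poly t p)`_i = t p`_i.
Proof. by rewrite coef_map_id0 // pe0. Qed.
Lemma mpD p q : pov E p -> pov E q -> map_poly t (p + q) = map_poly t p + map_poly t q.
Proof. by move=> Ep Eq; apply/polyP => i; rewrite coefD !mp_coef coefD peD. Qed.
Lemma mpB p q : pov E p -> pov E q -> map_poly t (p - q) = map_poly t p - map_poly t q.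
Proof. by move=> Ep Eq; apply/polyP => i; rewrite coefB !mp_coef coefB peB. Qed.
Lemma mpM p q : pov E p -> pov E q -> map_poly t (p * q) = map_poly t p * map_poly t q.
Proof.
move=> Ep Eq; apply/polyP => i; rewrite coefM mp_coef coefM pe_sum.
  by apply: eq_bigr => j _; rewrite !mp_coef peM.
by move=> j; apply: sfM.
Qed.
Lemma mpC c : map_poly t c%:P = (t c)%:P.
Proof. by apply/polyP => i; rewrite mp_coef !coefC; case: (i == 0)%N; rewrite ?pe0. Qed.
Lemma mpX : map_poly t 'X = 'X.
Proof. by apply/polyP => i; rewrite mp_coef !coefX; case: (i == 1)%N; rewrite ?pe0 ?pe1. Qed.
End Pemb.

End Sub.

Lemma decomp0 (K : fieldType) (h : {poly K}) : h = (\poly_(i < size h) h`_i.+1) * 'X + (h`_0)%:P.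
Proof.
apply/polyP => i; rewrite coefD coefMX coefC coef_poly.
case: i => [|i] /=; first by rewrite add0r.
rewrite addr0; case: ltnP => // hi; by rewrite nth_default // leqW.
Qed.

Lemma hornerB' (R : comNzRingType) (p q : {poly R}) z : (p - q).[z] = p.[z] - q.[z].
Proof. by rewrite hornerD hornerN. Qed.

Section Step.
Variables (k : fieldType) (K : closedFieldType) (iota : {rmorphism k -> K}).
Hypothesis alg : algebraic_over iota.

Lemma inv_closed (E S : K -> Prop) : is_subfield E -> (forall a, E (iota a)) -> ringcl S ->
  (forall x, E x -> S x) -> forall z, S z -> S z^-1.
Proof.
move=> HE Ei HS ES z Sz.
have [->|nz] := eqVneq z 0; first by rewrite invr0; case: HS.
have [g [g0 rg]] := alg z.
set h0 := map_poly iota g.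
have Eh0 : pov E h0 by move=> i; rewrite coef_map; apply: Ei.
have h0n : h0 != 0 by rewrite map_poly_eq0.
have rh0 : h0.[z] = 0 by apply/eqP.
have Etl h : pov E h -> pov E (\poly_(i < size h) h`_i.+1).
  by move=> Eh i; rewrite coef_poly; case: ltnP => _; [apply: Eh | apply: sf0].
suff [h [Eh [rh h00]]] : exists h, pov E h /\ h.[z] = 0 /\ h`_0 != 0.
  set t := \poly_(i < size h) h`_i.+1.
  have hz : t.[z] * z + h`_0 = 0 by move: rh; rewrite [in X in X = _](decomp0 h) hornerD hornerMX hornerC.
  have tz0 : t.[z] != 0.
    by apply/eqP => e; move: hz; rewrite e mul0r add0r => /eqP; rewrite (negPf h00).
  have -> : z^-1 = t.[z] * (- (h`_0)^-1).
    have hc : h`_0 = - (t.[z] * z) by apply/eqP; rewrite -addr_eq0 addrC hz.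
    by rewrite hc; field; rewrite nz oppr_eq0 mulf_eq0 negb_or tz0 nz.
  have [_ [_ [_ SM]]] := HS; apply: SM.
    by apply: (rcl_horner (E:=E)) => //; apply: Etl.
  by apply: ES; apply: sfN => //; apply: sfV => //; apply: Eh.
have: forall n (h : {poly K}), (size h <= n)%N -> pov E h -> h != 0 -> h.[z] = 0 ->
    exists h', pov E h' /\ h'.[z] = 0 /\ h'`_0 != 0.
  elim=> [|n IH] h sh Eh hn rh.
    by move: hn; rewrite -size_poly_eq0; move: sh; rewrite leqn0 => ->.
  have [h00|h00] := eqVneq h`_0 0; last by exists h.
  set t := \poly_(i < size h) h`_i.+1.
  have ht : h = t * 'X by rewrite {1}(decomp0 h) h00 addr0.
  have tn : t != 0 by apply: contraNneq hn => t0; rewrite ht t0 mul0r.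
  apply: (IH t) => //.
  - by move: sh; rewrite ht size_mulX.
  - exact: Etl.
  - by apply/eqP; move: rh; rewrite ht hornerMX => /eqP; rewrite mulf_eq0 (negPf nz) orbF.
by move=> /(_ (size h0) h0 (leqnn _) Eh0 h0n rh0).
Qed.

Lemma step (E : K -> Prop) t x y : pemb E t -> (forall a, E (iota a)) ->
  (forall p, pov E p -> p.[x] = 0 -> (map_poly t p).[y] = 0) ->
  exists E' t', pemb E' t' /\ (forall a, E' (iota a)) /\ (forall z, E z -> E' z) /\
    (forall z, E z -> t' z = t z) /\ E' x /\ t' x = y.
Proof.
move=> Ht Ei compat; have HE : is_subfield E by case: Ht.
pose E' z := exists p, pov E p /\ z = p.[x].
pose P z w := exists p, pov E p /\ z = p.[x] /\ w = (map_poly t p).[y].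
pose t' z := xget 0 (P z).
have t'E p : pov E p -> t' p.[x] = (map_poly t p).[y].
  move=> Ep; have [p0 [Ep0 [e1 ->]]] : P p.[x] (t' p.[x]).
    by apply: xgetPex; exists (map_poly t p).[y]; exists p.
  apply/eqP; rewrite -subr_eq0 -hornerB' -(mpB Ht) //; apply/eqP; apply: compat.
    exact: (povB HE).
  by rewrite hornerB' -e1 subrr.
have E'0 : E' 0 by exists 0; split; [exact: (pov0 HE) | rewrite horner0].
have E'1 : E' 1 by exists 1%:P; split; [exact: povC (sf1 HE) | rewrite hornerC].
have E'B a b : E' a -> E' b -> E' (a - b).
  by move=> [p [Ep ->]] [q [Eq ->]]; exists (p - q); split; [exact: (povB HE) | rewrite hornerB'].
have E'D a b : E' a -> E' b -> E' (a + b).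
  by move=> [p [Ep ->]] [q [Eq ->]]; exists (p + q); split; [exact: (povD HE) | rewrite hornerD].
have E'M a b : E' a -> E' b -> E' (a * b).
  by move=> [p [Ep ->]] [q [Eq ->]]; exists (p * q); split; [exact: (povM HE) | rewrite hornerM].
have EE' z : E z -> E' z by move=> Ez; exists z%:P; split; [exact: (povC HE Ez) | rewrite hornerC].
have rclE' : ringcl E' by split; [|split; [|split]].
have HE' : is_subfield E'.
  split; [|split; [|split; [|split]]] => //.
  by apply: (inv_closed HE Ei rclE' EE').
exists E', t'; split.
  split => //; split; [|split].
  - move=> a b [p [Ep ->]] [q [Eq ->]]; rewrite -hornerD !t'E ?(mpD Ht) ?hornerD //.
    exact: (povD HE).
  - move=> a b [p [Ep ->]] [q [Eq ->]]; rewrite -hornerM !t'E ?(mpM Ht) ?hornerM //.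
    exact: (povM HE).
  - by rewrite -[1](hornerC 1 x) t'E ?(mpC Ht) ?(pe1 Ht) ?hornerC //; apply: (povC HE (sf1 HE)).
split; first by move=> a; apply: EE'.
split => //.
split; first by move=> z Ez; rewrite -[z](hornerC z x) t'E ?(mpC Ht) ?hornerC //; apply: (povC HE Ez).
split; first by exists 'X; split; [exact: (povX HE) | rewrite hornerX].
by rewrite -[x]hornerX t'E ?(mpX Ht) ?hornerX //; apply: (povX HE).
Qed.

Lemma divmonic (E : K -> Prop) (HE : is_subfield E) m : pov E m -> lead_coef m = 1 ->
  forall p, pov E p -> exists q r, pov E q /\ pov E r /\ p = q * m + r /\ (size r < size m)%N.
Proof.
move=> Em mm.
have sm : (0 < size m)%N.
  by rewrite size_poly_gt0 -lead_coef_eq0 mm oner_neq0.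
suff H : forall n (p : {poly K}), (size p <= n)%N -> pov E p ->
    exists q r, pov E q /\ pov E r /\ p = q * m + r /\ (size r < size m)%N.
  by move=> p; apply: (H (size p)).
elim=> [|n IH] p sp Ep.
  exists 0, p; split; first exact: pov0.
  rewrite mul0r add0r; split => //; split => //.
  by move: sp sm; move: (size p) (size m) => a b; lia.
case: (ltnP (size p) (size m)) => hs.
  by exists 0, p; rewrite mul0r add0r; split => //; exact: pov0.
set d := (size p - size m)%N; set c := lead_coef p.
have Ec : E c by rewrite /c lead_coefE; apply: Ep.
set p' := p - (c *: 'X^d) * m.
have Ep' : pov E p'.
  by apply: povB => //; apply: povM => //; apply: povZ => //; apply: povXn.
have sp' : (size p' <= (size p).-1)%N.
  apply/leq_sizeP => j hj.
  rewrite coefB -scalerAl coefZ coefXnM.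
  have [hjp|hjp] := leqP (size p) j.
    rewrite nth_default //; case: ltnP => hjd; first by rewrite mulr0 subr0.
    by rewrite nth_default ?mulr0 ?subr0 //; rewrite /d; move: hs hjp; move: (size m) (size p) => a b; lia.
  have ej : j = (size p).-1 by move: hj hjp; move: (size p) => a; lia.
  have -> : (j < d)%N = false by rewrite /d; move: ej sm hs; move: (size m) (size p) => a b; lia.
  have -> : (j - d)%N = (size m).-1 by rewrite /d; move: ej sm hs; move: (size m) (size p) => a b; lia.
  by rewrite -lead_coefE mm mulr1 ej -lead_coefE subrr.
have sp'' : (size p' <= n)%N by apply: (leq_trans sp'); move: sp; move: (size p) => a; lia.
have [q [r [Eq [Er [e sr]]]]] := IH p' sp'' Ep'.
exists (q + c *: 'X^d), r; split; first by apply: povD => //; apply: povZ => //; apply: povXn.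
split => //; split => //.
by rewrite mulrDl -addrAC -e /p' subrK.
Qed.

Lemma base_compat (F : K -> Prop) s : is_subfield F -> ~ F s -> F (s ^+ 2) ->
  forall p, pov F p -> p.[s] = 0 -> p.[- s] = 0.
Proof.
move=> HF Fs Fs2 p Fp ps.
set m := 'X^2 - (s^+2)%:P.
have Em : pov F m by apply: povB => //; [apply: povXn | apply: povC].
have mm : lead_coef m = 1 by rewrite lead_coefXnsubC.
have sm : size m = 3 by rewrite size_XnsubC.
have [q [r [Eq [Er [e sr]]]]] := divmonic HF Em mm Fp.
have ms : m.[s] = 0 by rewrite hornerB' hornerXn hornerC subrr.
have ms' : m.[-s] = 0 by rewrite hornerB' hornerXn hornerC sqrrN subrr.
have rE z : r.[z] = r`_0 + r`_1 * z.
  rewrite (@horner_coef_wide _ 2); last by move: sr; rewrite sm.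
  by rewrite !big_ord_recl big_ord0 /= expr0 expr1 mulr1 addr0.
have rs : r.[s] = 0 by move: ps; rewrite e hornerD hornerM ms mulr0 add0r.
have r1 : r`_1 = 0.
  apply/eqP; apply/negP => /negP nz; apply: Fs.
  have -> : s = - r`_0 / r`_1.
    move: rs; rewrite rE => /eqP; rewrite addr_eq0 => /eqP ->.
    by rewrite opprK mulrC mulKf.
  by apply: (sfM HF); [apply: (sfN HF) | apply: (sfV HF)]; apply: Er.
have r0 : r`_0 = 0 by move: rs; rewrite rE r1 mul0r addr0.
by rewrite e hornerD hornerM ms' mulr0 add0r rE r1 r0 mul0r addr0.
Qed.

Definition goodpe (E0 : K -> Prop) (t0 : K -> K) (pt : (K -> Prop) * (K -> K)) :=
  pemb pt.1 pt.2 /\ (forall a, pt.1 (iota a)) /\ (forall z, E0 z -> pt.1 z) /\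
  (forall z, E0 z -> pt.2 z = t0 z).

Definition Rpe (a b : (K -> Prop) * (K -> K)) :=
  (forall z, a.1 z -> b.1 z) /\ (forall z, a.1 z -> b.2 z = a.2 z).

Lemma chain_ub E0 t0 (A : set {pt | goodpe E0 t0 pt}) (a0 : {pt | goodpe E0 t0 pt}) :
  A a0 -> (forall a b, A a -> A b -> Rpe (sval a) (sval b) \/ Rpe (sval b) (sval a)) ->
  exists u : {pt | goodpe E0 t0 pt}, forall a, A a -> Rpe (sval a) (sval u).
Proof.
move=> Aa0 tot.
pose EU z := exists a, A a /\ (sval a).1 z.
pose PU z w := exists a, A a /\ (sval a).1 z /\ w = (sval a).2 z.
pose tU z := xget 0 (PU z).
have tUE a z : A a -> (sval a).1 z -> tU z = (sval a).2 z.
  move=> Aa az; have [b [Ab [bz ->]]] : PU z (tU z) by apply: xgetPex; exists ((sval a).2 z), a.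
  by case: (tot a b Aa Ab) => [[_ ->]|[_ ->]].
have two a b z1 z2 : A a -> A b -> (sval a).1 z1 -> (sval b).1 z2 ->
    exists c, A c /\ (sval c).1 z1 /\ (sval c).1 z2.
  move=> Aa Ab az bz; case: (tot a b Aa Ab) => [[ab _]|[ba _]].
    by exists b; split => //; split => //; apply: ab.
  by exists a; split => //; split => //; apply: ba.
have gd (a : {pt | goodpe E0 t0 pt}) : goodpe E0 t0 (sval a) by case: a.
have sfa (a : {pt | goodpe E0 t0 pt}) : is_subfield (sval a).1 by case: (gd a) => [[]].
have goodU : goodpe E0 t0 (EU, tU).
  rewrite /goodpe /=; split; last split; last split.
  - split.
      split; first by exists a0; split => //; apply: sf0.
      split; first by exists a0; split => //; apply: sf1.
      split.
        move=> x y [a [Aa ax]] [b [Ab bx]]; have [c [Ac [cx cy]]] := two _ _ _ _ Aa Ab ax bx.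
        by exists c; split => //; apply: sfB.
      split.
        move=> x y [a [Aa ax]] [b [Ab bx]]; have [c [Ac [cx cy]]] := two _ _ _ _ Aa Ab ax bx.
        by exists c; split => //; apply: sfM.
      by move=> x [a [Aa ax]]; exists a; split => //; apply: sfV.
    split.
      move=> x y [a [Aa ax]] [b [Ab bx]]; have [c [Ac [cx cy]]] := two _ _ _ _ Aa Ab ax bx.
      rewrite !(tUE c) //; first by apply: (peD (gd c).1).
      by apply: sfD.
    split.
      move=> x y [a [Aa ax]] [b [Ab bx]]; have [c [Ac [cx cy]]] := two _ _ _ _ Aa Ab ax bx.
      rewrite !(tUE c) //; first by apply: (peM (gd c).1).
      by apply: sfM.
    by rewrite (tUE a0) //; [apply: (pe1 (gd a0).1) | apply: sf1].
  - by move=> a; exists a0; split => //; case: (gd a0) => _ [].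
  - by move=> z z0; exists a0; split => //; case: (gd a0) => _ [_ [H _]]; apply: H.
  - move=> z z0 /=; have ez : (sval a0).1 z by case: (gd a0) => _ [_ [H _]]; apply: H.
    by rewrite (tUE a0) //; case: (gd a0) => _ [_ [_ H]]; apply: H.
exists (exist _ (EU, tU) goodU) => a Aa /=; split.
  by move=> z az; exists a.
by move=> z az; apply: tUE.
Qed.

Theorem ext_aut (F : K -> Prop) s : ext_of_k iota F -> ~ F s -> F (s ^+ 2) ->
  exists sigma : {rmorphism K -> K}, fixes sigma F /\ sigma s = - s.
Proof.
move=> [HF Fi] Fs Fs2.
have pid : pemb F id by split => //; split => //.
have [E0 [t0 [Hp0 [Ei0 [FE0 [t0F [E0s t0s]]]]]]] := step pid Fi
  (fun p Fp ps => eq_ind_r (fun q => q.[-s] = 0) (base_compat HF Fs Fs2 Fp ps)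
     (map_poly_id (fun _ _ => erefl))).
pose T := {pt | goodpe E0 t0 pt}.
have g0 : goodpe E0 t0 (E0, t0) by split => //; split => //; split.
pose R : rel T := fun a b => `[< Rpe (sval a) (sval b) >].
have [tm tmax] : exists tm, premaximal (fun x y => R x y) tm.
  apply: (@ZL_preorder T (exist _ _ g0) R).
  - by move=> t; apply/asboolP; split.
  - move=> a b c /asboolP [ab1 ab2] /asboolP [bc1 bc2]; apply/asboolP; split.
      by move=> z az; apply: bc1; apply: ab1.
    by move=> z az; rewrite bc2 ?ab2 //; apply: ab1.
  - move=> A tot; have [[a0 Aa0]|nA] := pselect (exists a, A a); last first.
      by exists (exist _ _ g0) => a Aa; exfalso; apply: nA; exists a.
    have tot' : forall a b, A a -> A b -> Rpe (sval a) (sval b) \/ Rpe (sval b) (sval a).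
      by move=> a b Aa Ab; case: (tot a b Aa Ab) => [/asboolP h|/asboolP h]; [left|right].
    have [u Hu] := @chain_ub E0 t0 A a0 Aa0 tot'.
    by exists u => a Aa; apply/asboolP; apply: Hu.
case: tm tmax => [[Em tau] gm] tmax.
have := gm; rewrite /goodpe /= => -[Hpm [Eim [E0m tm0]]].
have HEm : is_subfield Em by case: Hpm.
have allE : forall x, Em x.
  move=> x; apply: contrapT => nx.
  have exP : exists n, (fun n => `[< exists m, pov Em m /\ lead_coef m = 1 /\ m.[x] = 0 /\ size m = n >]) n.
    have [g [g0' rg]] := alg x.
    set h := map_poly iota g.
    have hn : h != 0 by rewrite map_poly_eq0.
    exists (size ((lead_coef h)^-1 *: h)); apply/asboolP.
    exists ((lead_coef h)^-1 *: h); split.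
      apply: povZ => //; first by apply: sfV => //; rewrite lead_coefE /h coef_map; apply: Eim.
      by move=> i; rewrite /h coef_map; apply: Eim.
    split; first by rewrite lead_coefZ mulVf // lead_coef_eq0.
    by split => //; rewrite hornerZ (eqP rg) mulr0.
  case: (ex_minnP exP) => n /asboolP [m [Em_ [mm [mx sm]]]] minn.
  have ps : size (map_poly tau m) = size m.
    by rewrite size_map_poly_id0 // mm (pe1 Hpm) oner_neq0.
  have sm1 : size m != 1.
    apply/eqP => e; move: mx; rewrite (@horner_coef_wide _ 1) ?e //.
    rewrite big_ord1 expr0 mulr1 => m0.
    by move: mm; rewrite lead_coefE e /= m0 => /eqP; rewrite eq_sym oner_eq0.
  have [y ry] : exists y, root (map_poly tau m) y by apply/closed_rootP; rewrite ps.
  have compat : forall p, pov Em p -> p.[x] = 0 -> (map_poly tau p).[y] = 0.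
    move=> p Ep px.
    have [q [r [Eq [Er [e sr]]]]] := divmonic HEm Em_ mm Ep.
    have rx : r.[x] = 0 by move: px; rewrite e hornerD hornerM mx mulr0 add0r.
    have r0 : r = 0.
      have [//|rn] := eqVneq r 0; exfalso.
      have : (n <= size ((lead_coef r)^-1 *: r))%N.
        apply: minn; apply/asboolP; exists ((lead_coef r)^-1 *: r); split.
          by apply: povZ => //; apply: sfV => //; rewrite lead_coefE; apply: Er.
        split; first by rewrite lead_coefZ mulVf // lead_coef_eq0.
        by split => //; rewrite hornerZ rx mulr0.
      rewrite size_scale ?invr_eq0 ?lead_coef_eq0 // => h.
      by move: sr; rewrite sm ltnNge h.
    rewrite e r0 addr0 (mpM Hpm) // hornerM (eqP ry) mulr0 //.
  have [E' [t' [Hp' [Ei' [EE' [t'E [E'x t'x]]]]]]] := step Hpm Eim compat.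
  have g' : goodpe E0 t0 (E', t').
    split => //; split => //; split; first by move=> z z0; apply: EE'; apply: E0m.
    by move=> z z0 /=; rewrite t'E ?tm0 //; apply: E0m.
  have := tmax (exist _ _ g') (introT (asboolP _) (conj EE' t'E)).
  by move=> /asboolP [/= H _]; apply: nx; apply: H.
have tB x y : tau (x - y) = tau x - tau y by apply: (peB Hpm).
have tM x y : tau (x * y) = tau x * tau y by apply: (peM Hpm).
have t1 : tau 1 = 1 by apply: (pe1 Hpm).
pose sg := mkrm tB tM t1.
have sgE x : sg x = tau x by [].
have sgF x : F x -> sg x = x by move=> Fx; rewrite sgE tm0 ?t0F //; apply: FE0.
exists sg; split; last by rewrite sgE tm0 ?t0s.
split => //.
have sg_inj : injective sg := fmorph_inj sg.
have sg_surj : forall w, exists z, sg z = w.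
  move=> w; have [g [gn0 rg]] := alg w.
  set h := map_poly iota g.
  have hn : h != 0 by rewrite map_poly_eq0.
  have [r er] := closed_field_poly_normal h.
  have lc : lead_coef h != 0 by rewrite lead_coef_eq0.
  have rootE z : root h z = (z \in r) by rewrite er rootZ // root_prod_XsubC.
  have hsg : map_poly sg h = h.
    by rewrite /h -map_poly_comp; apply: eq_map_poly => a /=; apply: sgF; apply: Fi.
  have rsg z : z \in undup r -> sg z \in undup r.
    rewrite !mem_undup -!rootE => /eqP hz; apply/eqP.
    by rewrite -hsg horner_map hz rmorph0.
  have u1 : uniq [seq sg z | z <- undup r] by rewrite map_inj_uniq // undup_uniq.
  have s1 : {subset [seq sg z | z <- undup r] <= undup r}.
    by move=> _ /mapP [z zr ->]; apply: rsg.
  have s2 : (size (undup r) <= size [seq sg z | z <- undup r])%N by rewrite size_map.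
  have [_ hm] := uniq_min_size u1 s1 s2.
  have : w \in [seq sg z | z <- undup r] by rewrite hm mem_undup -rootE.
  by move=> /mapP [z _ ->]; exists z.
pose inv w := xget 0 (fun z => sg z = w).
apply: (@Bijective _ _ _ inv) => [x|w].
  have := xgetPex 0 (P := fun z => sg z = sg x) (ex_intro _ x erefl).
  by move/sg_inj.
exact: (xgetPex 0 (P := fun z => sg z = w) (sg_surj w)).
Qed.

End Step.


Lemma interp (K : fieldType) (rs : seq K) (g : K -> K) : uniq rs ->
  exists p : {poly K}, forall th, th \in rs -> p.[th] = g th.
Proof.
elim: rs => [|a rs IH] /=; first by exists 0.
move=> /andP [ars urs]; have [p Hp] := IH urs.
set Pi := \prod_(t <- rs) ('X - t%:P).
have Pia : Pi.[a] != 0.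
  rewrite /Pi horner_prod prodf_seq_neq0; apply/allP => t trs /=.
  by rewrite hornerXsubC subr_eq0; apply: contraNneq ars => ->.
have Pit t : t \in rs -> Pi.[t] = 0 by move=> trs; apply/eqP; rewrite /Pi -/(root _ _) root_prod_XsubC.
exists (p + ((g a - p.[a]) / Pi.[a]) *: Pi) => th; rewrite inE => /orP [/eqP ->|thr].
  by rewrite hornerD hornerZ divfK // addrC subrK.
by rewrite hornerD hornerZ (Pit th) // mulr0 addr0 Hp.
Qed.

Section Roots.
Variables (K : closedFieldType) (fK dK : {poly K}) (rs : seq K).
Hypotheses (urs : uniq rs) (lc0 : lead_coef fK != 0)
  (efK : fK = lead_coef fK *: \prod_(z <- rs) ('X - z%:P)) (srs : size rs = 6%N)
  (dnz : forall th, th \in rs -> dK.[th] != 0) (two : (2 : K) != 0).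

Lemma mrs x : root fK x = (x \in rs).
Proof. by rewrite efK rootZ // root_prod_XsubC. Qed.

Lemma sfK : size fK = 7%N.
Proof. by rewrite efK size_scale // size_prod_XsubC srs. Qed.

Lemma modp_eval p th : th \in rs -> (p %% fK).[th] = p.[th].
Proof.
move=> thr; rewrite [in RHS](divp_eq p fK) hornerD hornerM.
by move: (thr); rewrite -mrs => /eqP ->; rewrite mulr0 add0r.
Qed.

Lemma vanish p : (forall th, th \in rs -> p.[th] = 0) -> p %% fK = 0.
Proof.
move=> Hp; apply: modp_eq0; rewrite efK dvdpZl //.
apply: uniq_roots_dvdp; last by rewrite uniq_rootsE.
by apply/allP => t tr; apply/eqP; apply: Hp.
Qed.

Lemma modeq p q : (forall th, th \in rs -> p.[th] = q.[th]) -> p %% fK = q %% fK.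
Proof.
move=> H; apply/eqP; rewrite -subr_eq0 -modpN -modpD; apply/eqP; apply: vanish.
by move=> th thr; rewrite hornerD hornerN H // subrr.
Qed.

Lemma inv_ex e : (forall th, th \in rs -> e.[th] != 0) ->
  exists e', (e * e') %% fK = 1.
Proof.
move=> enz; have [e' He'] := interp (fun th => (e.[th])^-1) urs.
exists e'; rewrite -[1 in RHS](@modp_small _ 1 fK); last by rewrite size_poly1 sfK.
by apply: modeq => th thr; rewrite hornerM He' // hornerC mulfV // enz.
Qed.

Lemma inv_eval e e' th : (e * e') %% fK = 1 -> th \in rs -> e'.[th] = (e.[th])^-1.
Proof.
move=> H thr; have := modp_eval (e * e') thr; rewrite H hornerC hornerM => h.
have enz : e.[th] != 0 by apply/eqP => e0; move/eqP: h; rewrite e0 mul0r oner_eq0.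
by rewrite -[e'.[th]](mulKf enz) -h mulr1.
Qed.

Definition Pr (e : {poly K}) := \prod_(th <- rs) e.[th].

Lemma sq_eval e th : is_sqrt fK dK e -> th \in rs -> e.[th] ^+ 2 = dK.[th].
Proof. by move=> He thr; rewrite expr2 -hornerM -(modp_eval _ thr) He modp_eval. Qed.

Lemma e_nz e th : is_sqrt fK dK e -> th \in rs -> e.[th] != 0.
Proof.
move=> He thr; have := dnz thr; rewrite -(sq_eval He thr).
by apply: contraNneq => ->; rewrite expr0n.
Qed.

Lemma Pr_nz e : is_sqrt fK dK e -> Pr e != 0.
Proof. by move=> He; rewrite prodf_seq_neq0; apply/allP => th thr /=; apply: e_nz. Qed.

Lemma ratio e1 e2 th : is_sqrt fK dK e1 -> is_sqrt fK dK e2 -> th \in rs ->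
  e2.[th] = e1.[th] \/ e2.[th] = - e1.[th].
Proof.
move=> H1 H2 thr; have : e2.[th] ^+ 2 - e1.[th] ^+ 2 = 0 by rewrite !sq_eval // subrr.
rewrite subr_sqr => /eqP; rewrite mulf_eq0 subr_eq0 addr_eq0 => /orP [/eqP->|/eqP->].
  by left. by right.
Qed.

Lemma Pr_rel e1 e2 (s : seq K) : is_sqrt fK dK e1 -> is_sqrt fK dK e2 ->
  {subset s <= rs} ->
  \prod_(th <- s) e2.[th] =
  (-1) ^+ (count (fun th => e2.[th] / e1.[th] == -1) s) * \prod_(th <- s) e1.[th].
Proof.
move=> H1 H2; elim: s => [|a s IH] sub; first by rewrite !big_nil mulr1.
have ars : a \in rs by apply: sub; rewrite inE eqxx.
have subs : {subset s <= rs} by move=> x xs; apply: sub; rewrite inE xs orbT.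
have nz := e_nz H1 ars.
rewrite !big_cons IH //= exprD.
case: (ratio H1 H2 ars) => ->.
  rewrite divff // -[1 == -1]/(1 == -1) .
  have -> : (1 == -1 :> K) = false.
    by apply/negbTE; apply: contra two => /eqP h; rewrite -[2]/(1 + 1) {1}h addNr.
  by rewrite expr0 mul1r; ring.
have -> : - e1.[a] / e1.[a] = -1 by rewrite mulNr divff.
by rewrite eqxx expr1; ring.
Qed.

Lemma even_iff e1 e2 : is_sqrt fK dK e1 -> is_sqrt fK dK e2 ->
  even_sign_changes fK e1 e2 <-> Pr e1 = Pr e2.
Proof.
move=> H1 H2; split.
  move=> [rs' [urs' [mrs' ev]]].
  have pe : perm_eq rs rs' by apply: uniq_perm => // x; rewrite mrs' mrs.
  have sub' : {subset rs' <= rs} by move=> x; rewrite mrs' mrs.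
  have := Pr_rel H1 H2 sub'.
  by rewrite -!(perm_big _ pe) -signr_odd (negPf ev) expr0 mul1r /Pr => ->.
move=> e; exists rs; split => //; split; first by move=> x; rewrite mrs.
apply: contraT => /negPn od.
have := @Pr_rel e1 e2 rs H1 H2 (fun x xr => xr).
rewrite -signr_odd od expr1 -/(Pr e2) -/(Pr e1) -e => h.
have h' : Pr e1 + Pr e1 = 0 by rewrite {1}h; ring.
have : 2 * Pr e1 = 0 by rewrite -h'; ring.
by move/eqP; rewrite mulf_eq0 (negPf two) (negPf (Pr_nz H1)).
Qed.

End Roots.


Section Roots2.
Variables (K : closedFieldType) (fK dK : {poly K}) (rs : seq K).
Hypotheses (urs : uniq rs) (lc0 : lead_coef fK != 0)
  (efK : fK = lead_coef fK *: \prod_(z <- rs) ('X - z%:P)) (srs : size rs = 6%N)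
  (dnz : forall th, th \in rs -> dK.[th] != 0) (two : (2 : K) != 0).

Lemma line_eq e1 e2 : is_sqrt fK dK e1 -> is_sqrt fK dK e2 ->
  lineL fK e1 = lineL fK e2 -> Pr rs e1 = Pr rs e2.
Proof.
move=> H1 H2 eL.
have [e1' i1] := inv_ex urs lc0 efK srs (fun th thr => e_nz lc0 efK dnz H1 thr).
have mem1 (a b : K) : lineL fK e2 ((e1' * (a *: 'X + b%:P)) %% fK).
  by rewrite -eL; exists e1'; split => //; exists a, b.
have [e2a [i2a [a [b ea]]]] := mem1 0 1.
have [e2b [i2b [c [d eb]]]] := mem1 1 0.
have ev th : th \in rs -> e2.[th] / e1.[th] = a * th + b /\ th * (e2.[th] / e1.[th]) = c * th + d.
  move=> thr.
  have n1 := e_nz lc0 efK dnz H1 thr; have n2 := e_nz lc0 efK dnz H2 thr.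
  have h1 := congr1 (fun q => q.[th]) ea; have h2 := congr1 (fun q => q.[th]) eb.
  rewrite /= !(modp_eval lc0 efK) // !hornerM !hornerD !hornerZ hornerX !hornerC in h1 h2.
  rewrite (inv_eval lc0 efK i1) // (inv_eval lc0 efK i2a) // in h1.
  rewrite (inv_eval lc0 efK i1) // (inv_eval lc0 efK i2b) // in h2.
  split.
    apply: (mulfI (invr_neq0 n2)); rewrite -h1; field; rewrite n1 n2 //.
  apply: (mulfI (invr_neq0 n2)); rewrite -h2; field; rewrite n1 n2 //.
set Q := a *: 'X^2 + (b - c) *: 'X - d%:P.
have Q0 : Q = 0.
  apply: contraTeq isT => Qn.
  have : (size rs < size Q)%N.
    apply: max_poly_roots => //; apply/allP => th thr; apply/eqP.
    have [r1 r2] := ev th thr.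
    rewrite /Q !hornerD hornerN !hornerZ hornerXn hornerX hornerC.
    have -> : d = th * (a * th + b) - c * th by rewrite -r1 r2; ring.
    ring.
  have : (size Q <= 3)%N.
    apply/leq_sizeP => j hj; rewrite /Q coefB coefD !coefZ coefXn coefX coefC.
    by case: j hj => [|[|[|j]]] //= _; rewrite !mulr0 addr0 subr0.
  by rewrite srs => h1 h2; have := leq_trans h2 h1.
have a0 : a = 0.
  by have := congr1 (fun q : {poly K} => q`_2) Q0; rewrite /Q /= coefB coefD !coefZ coefXn coefX coefC /= mulr1 mulr0 addr0 subr0 coef0.
have eb' th : th \in rs -> e2.[th] = b * e1.[th].
  move=> thr; have [r1 _] := ev th thr; rewrite a0 mul0r add0r in r1.
  by rewrite -r1 divfK // (e_nz lc0 efK dnz H1 thr).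
have b2 : b ^+ 6 = 1.
  have th0r : rs`_0 \in rs by rewrite mem_nth // srs.
  have n1 := e_nz lc0 efK dnz H1 th0r.
  case: (ratio lc0 efK H1 H2 th0r) => h; rewrite eb' // in h.
    by rewrite -[b](mulfK n1) h divff // expr1n.
  by rewrite -[b](mulfK n1) h mulNr divff // -signr_odd /= expr0.
symmetry; rewrite /Pr (eq_big_seq (fun th => b * e1.[th])); last by move=> th thr; apply: eb'.
rewrite big_split /= (big_nth 0) prodr_const_nat subn0 srs b2 mul1r.
by [].
Qed.

Lemma sqrt_ex : exists e, is_sqrt fK dK e.
Proof.
have sq a : exists w : K, w ^+ 2 = a.
  have : size ('X^2 - a%:P : {poly K}) != 1 by rewrite size_XnsubC.
  move/closed_rootP => [w]; rewrite /root hornerD hornerN hornerXn hornerC subr_eq0 => /eqP h.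
  by exists w.
have [e He] := interp (fun th => xget 0 (fun w => w ^+ 2 = dK.[th])) urs.
exists e; rewrite /is_sqrt; apply: (modeq urs lc0 efK) => th thr.
rewrite hornerM He // -expr2.
exact: (xgetPex 0 (P := fun w => w ^+ 2 = dK.[th])) (sq _).
Qed.

Lemma Pr_sq e : is_sqrt fK dK e -> Pr rs e ^+ 2 = \prod_(th <- rs) dK.[th].
Proof.
move=> He; rewrite /Pr -prodrXl; apply: eq_big_seq => th thr.
exact: (sq_eval lc0 efK).
Qed.

Lemma Pr_pm e s : is_sqrt fK dK e -> s ^+ 2 = \prod_(th <- rs) dK.[th] ->
  Pr rs e = s \/ Pr rs e = - s.
Proof.
move=> He hs; have : Pr rs e ^+ 2 - s ^+ 2 = 0 by rewrite Pr_sq // hs subrr.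
rewrite subr_sqr => /eqP; rewrite mulf_eq0 subr_eq0 addr_eq0 => /orP [/eqP->|/eqP->].
  by left. by right.
Qed.

Section Gal.
Variables (sg : {rmorphism K -> K}).
Hypotheses (hf : map_poly sg fK = fK) (hd : map_poly sg dK = dK).

Lemma sqrt_map e : is_sqrt fK dK e -> is_sqrt fK dK (map_poly sg e).
Proof.
rewrite /is_sqrt => He.
by rewrite -rmorphM -[in LHS]hf -map_modp He map_modp hf hd.
Qed.

Lemma Pr_map e : Pr rs (map_poly sg e) = sg (Pr rs e).
Proof.
rewrite /Pr rmorph_prod.
rewrite [in RHS](eq_bigr (fun th => (map_poly sg e).[sg th])); last by move=> th _; rewrite horner_map.
rewrite -[in RHS](big_map sg predT (fun th => (map_poly sg e).[th])).
apply: perm_big.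
have u1 : uniq [seq sg z | z <- rs] by rewrite map_inj_uniq //; apply: fmorph_inj.
have s1 : {subset [seq sg z | z <- rs] <= rs}.
  move=> _ /mapP [z zr ->]; rewrite -(mrs lc0 efK).
  by rewrite -hf /root horner_map; move: zr; rewrite -(mrs lc0 efK) => /eqP ->; rewrite rmorph0.
have s2 : (size rs <= size [seq sg z | z <- rs])%N by rewrite size_map.
have [_ hm] := uniq_min_size u1 s1 s2.
by apply: uniq_perm => // x; rewrite hm.
Qed.

Lemma line_sub e q : line_img sg (lineL fK e) q -> lineL fK (map_poly sg e) q.
Proof.
move=> [q0 [[e' [ie [a [b ->]]]] ->]].
exists (map_poly sg e'); split.
  by rewrite -rmorphM -[in LHS]hf -map_modp ie rmorph1.
exists (sg a), (sg b).
by rewrite map_modp hf rmorphM rmorphD /= map_polyZ map_polyX map_polyC.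
Qed.

End Gal.

Lemma line_img_eq (sg : {rmorphism K -> K}) e : bijective sg ->
  map_poly sg fK = fK -> line_img sg (lineL fK e) = lineL fK (map_poly sg e).
Proof.
case=> g c1 c2 hf.
have gB x y : g (x - y) = g x - g y by apply: (can_inj c1); rewrite rmorphB !c2.
have gM x y : g (x * y) = g x * g y by apply: (can_inj c1); rewrite rmorphM !c2.
have g1 : g 1 = 1 by apply: (can_inj c1); rewrite rmorph1 c2.
pose tg := mkrm gB gM g1.
have idm (p : {poly K}) : map_poly tg (map_poly sg p) = p.
  rewrite -map_poly_comp (eq_map_poly (g := id)); last by move=> x /=; apply: c1.
  by apply/polyP => i; rewrite coef_map_id0.
have idm' (p : {poly K}) : map_poly sg (map_poly tg p) = p.
  rewrite -map_poly_comp (eq_map_poly (g := id)); last by move=> x /=; apply: c2.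
  by apply/polyP => i; rewrite coef_map_id0.
have hf' : map_poly tg fK = fK by rewrite -[in LHS]hf idm.
apply: funext => q; apply: propext; split; first exact: line_sub.
move=> hq; exists (map_poly tg q); split; last by rewrite idm'.
rewrite -[e]idm; apply: line_sub => //.
by exists q.
Qed.

End Roots2.


Lemma normA_prod (k : fieldType) (K : closedFieldType) (iota : {rmorphism k -> K})
  (f delta : {poly k}) (rs : seq K) : uniq rs -> size rs = 6%N ->
  (forall x, x \in rs -> root (map_poly iota f) x) -> size f = 7%N ->
  iota (normA f delta) = \prod_(th <- rs) (map_poly iota delta).[th].
Proof.
move=> urs srs rrs sf.
set fK := map_poly iota f; set dK := map_poly iota delta.
have sfK : size fK = 7%N by rewrite size_map_poly.
have fK0 : fK != 0 by rewrite -size_poly_eq0 sfK.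
have meval p th : th \in rs -> (p %% fK).[th] = p.[th].
  move=> thr; rewrite [in RHS](divp_eq p fK) hornerD hornerM.
  by move: (rrs th thr) => /eqP ->; rewrite mulr0 add0r.
rewrite /normA -det_map_mx.
set M' := \matrix_(i < 6, j < 6) ((dK * 'X^i) %% fK)`_j.
have -> : map_mx iota (\matrix_(i < 6, j < 6) ((delta * 'X^i) %% f)`_j) = M'.
  apply/matrixP => i j; rewrite !mxE -coef_map_id0 ?rmorph0 //.
  by rewrite map_modp rmorphM /= map_polyXn.
set V := Vandermonde 6 (\row_(l < 6) rs`_l).
set D := diag_mx (\row_(l < 6) dK.[rs`_l]).
have MV : M' *m V = V *m D.
  apply/matrixP => i l; rewrite mul_mx_diag !mxE.
  rewrite (eq_bigr (fun j : 'I_6 => ((dK * 'X^i) %% fK)`_j * rs`_l ^+ j)); last first.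
    by move=> j _; rewrite !mxE.
  rewrite -(@horner_coef_wide _ 6 ((dK * 'X^i) %% fK) rs`_l); last first.
    by have := ltn_modp (dK * 'X^i) fK; rewrite fK0 sfK.
  by rewrite meval ?mem_nth ?srs // hornerM hornerXn mulrC.
have dV : \det V != 0.
  rewrite det_Vandermonde; apply/prodf_neq0 => i _; apply/prodf_neq0 => j ij.
  rewrite !mxE subr_eq0 nth_uniq ?srs //.
  by rewrite neq_ltn ij orbT.
have := congr1 determinant MV; rewrite !det_mulmx => h.
have eD : \det M' = \det D by apply: (mulIf dV); rewrite h mulrC.
rewrite eD det_diag.
rewrite (eq_bigr (fun l : 'I_6 => dK.[rs`_l])); last by move=> l _; rewrite mxE.
by rewrite [in RHS](big_nth 0) srs big_mkord.
Qed.

Theorem lemma2p39 (k : fieldType) (K : closedFieldType) (iota : {rmorphism k -> K})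
  (f delta : {poly k}) (s : K) (Lam : ({poly K} -> Prop) -> Prop) :
  algebraic_over iota ->
  2 \notin [pchar k] ->
  separable_poly f -> size f = 7%N ->
  coprimep delta f ->
  s ^+ 2 = iota (normA f delta) ->
  maximal_parity_set iota f delta Lam ->
  is_field_of_def iota Lam (adjoin iota s).
Proof.
move=> alg ch2 sep sf cop hs [[LamL LamP] Lammax].
pose fK := map_poly iota f; pose dK := map_poly iota delta.
have [rs efK] := closed_field_poly_normal fK.
have fK0 : fK != 0 by rewrite -size_poly_eq0 size_map_poly sf.
have lc0 : lead_coef fK != 0 by rewrite lead_coef_eq0.
have urs : uniq rs.
  have sK : separable_poly fK by rewrite separable_map.
  rewrite -separable_prod_XsubC; apply: (dvdp_separable _ sK).
  by rewrite [X in _ %| X]efK dvdpZr // dvdpp.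
have srs : size rs = 6%N.
  have : size fK = 7%N by rewrite size_map_poly.
  by rewrite efK size_scale // size_prod_XsubC => -[].
have rrs x : x \in rs -> root fK x by move=> xr; rewrite (mrs lc0 efK).
have dnz th : th \in rs -> dK.[th] != 0.
  move=> thr; apply: (coprimep_root (p := fK)) (rrs _ thr).
  by rewrite coprimep_sym coprimep_map.
have two : (2 : K) != 0.
  have h2 : (2%:R : k) != 0.
    by apply: contra ch2 => h; rewrite inE /=.
  by rewrite -(rmorph_nat iota 2) fmorph_eq0.
have hN : s ^+ 2 = \prod_(th <- rs) dK.[th] by rewrite hs (@normA_prod _ _ iota f delta rs urs srs rrs sf).
have fixmap (sg : {rmorphism K -> K}) (p : {poly k}) : (forall a, sg (iota a) = iota a) ->
    map_poly sg (map_poly iota p) = map_poly iota p.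
  by move=> H; rewrite -map_poly_comp; apply: eq_map_poly => a /=; apply: H.
have evI e1 e2 := even_iff urs lc0 efK dnz two (e1 := e1) (e2 := e2).
have lineE e1 e2 := line_eq urs lc0 efK srs dnz (e1 := e1) (e2 := e2).
have nz e : is_sqrt fK dK e -> Pr rs e != 0 by move=> He; apply: (Pr_nz lc0 efK dnz He).
split.
  split; last by move=> a F [_ Fi] _; apply: Fi.
  split; first by move=> F [HF _] _; apply: (sf0 HF).
  split; first by move=> F [HF _] _; apply: (sf1 HF).
  split; first by move=> x y ax ay F HF Fs; apply: (sfB HF.1); [apply: ax | apply: ay].
  split; first by move=> x y ax ay F HF Fs; apply: (sfM HF.1); [apply: ax | apply: ay].
  by move=> x ax F HF Fs; apply: (sfV HF.1); apply: ax.
split.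
  move=> sg [bij fx] l Hl.
  have sgs : sg s = s by apply: fx => F HF Fs.
  have sgi a : sg (iota a) = iota a by apply: fx => F [HF Fi] Fs; apply: Fi.
  have [e [He el]] := LamL l Hl.
  rewrite el in Hl *; rewrite line_img_eq //; last exact: fixmap.
  have He' : is_sqrt fK dK (map_poly sg e) by apply: (sqrt_map (fK := fK) (dK := dK)) => //; exact: fixmap.
  have Pe : Pr rs (map_poly sg e) = Pr rs e.
    rewrite (Pr_map urs lc0 efK); last exact: fixmap.
    by case: (Pr_pm lc0 efK He hN) => ->; rewrite ?rmorphN sgs.
  apply: (Lammax (fun l' => Lam l' \/ l' = lineL fK (map_poly sg e))); last by right.
    split.
      by move=> l' [/LamL //|->]; exists (map_poly sg e).
    move=> l1 l2 [H1|->] [H2|->].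
    - exact: LamP.
    - have [e1 [e2 [H1' [H2' [el1 [el2 ev]]]]]] := LamP _ _ H1 Hl.
      exists e1, (map_poly sg e); do 4!split => //.
      apply/evI => //; rewrite Pe (lineE e e2 He H2' el2).
      exact: (proj1 (evI e1 e2 H1' H2') ev).
    - have [e1 [e2 [H1' [H2' [el1 [el2 ev]]]]]] := LamP _ _ Hl H2.
      exists (map_poly sg e), e2; do 4!split => //.
      apply/evI => //; rewrite Pe (lineE e e1 He H1' el1).
      exact: (proj1 (evI e1 e2 H1' H2') ev).
    - by exists (map_poly sg e), (map_poly sg e); do 4!split => //; apply/evI.
  by move=> l' Hl'; left.
move=> F' HF' pres x ax; apply: ax => //.
apply: contrapT => nFs.
have F's2 : F' (s ^+ 2) by rewrite hs; apply: HF'.2.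
have [sg [[bij fixF] sgs]] := ext_aut alg HF' nFs F's2.
have sgi a : sg (iota a) = iota a by apply: fixF; apply: HF'.2.
have [l0 Hl0] : exists l, Lam l.
  apply: contrapT => ne; have [e0 He0] := @sqrt_ex K fK dK rs urs lc0 efK.
  have : Lam (lineL fK e0).
    apply: (Lammax (fun l => l = lineL fK e0)) => //.
      split; first by move=> l ->; exists e0.
      by move=> l1 l2 -> ->; exists e0, e0; do 4!split => //; apply/evI.
    by move=> l Hl; exfalso; apply: ne; exists l.
  by move=> h; apply: ne; exists (lineL fK e0).
have [e [He el0]] := LamL l0 Hl0.
have := pres sg (conj bij fixF) l0 Hl0; rewrite el0 line_img_eq //; last exact: fixmap.
move=> Hn.
have He' : is_sqrt fK dK (map_poly sg e) by apply: (sqrt_map (fK := fK) (dK := dK)) => //; exact: fixmap.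
rewrite el0 in Hl0.
have [e1 [e2 [H1 [H2 [el1 [el2 ev]]]]]] := LamP _ _ Hn Hl0.
have P12 : Pr rs e1 = Pr rs e2 by apply/evI.
have Pe1 : Pr rs (map_poly sg e) = Pr rs e1 by apply: lineE.
have Pe2 : Pr rs e = Pr rs e2 by apply: lineE.
have Pm : Pr rs (map_poly sg e) = - Pr rs e.
  rewrite (Pr_map urs lc0 efK); last exact: fixmap.
  by case: (Pr_pm lc0 efK He hN) => ->; rewrite ?rmorphN sgs ?opprK.
have : Pr rs e + Pr rs e = 0 by rewrite {1}Pe2 -P12 -Pe1 Pm addNr.
move=> h; have : 2 * Pr rs e = 0 by rewrite -h; ring.
by move/eqP; rewrite mulf_eq0 (negPf two) (negPf (nz _ He)).
Qed.
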